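(* Let $\alpha\colon S\to\mathcal I(X)$ be a representation of a countable discrete inverse semigroup $S$ with identity, and let $A\subseteq X$ be $S$-domain F\o lner. Then for every $\varepsilon>0$ and finite $\mathcal F\subseteq S$ there is a finite non-empty $F_0\subseteq A$ consisting of a single $\approx$-equivalence class (i.e. $u\approx v$ for all $u,v\in F_0$) such that $|\alpha_s(F_0\cap D_{s^*s})\setminus F_0|<\varepsilon|F_0|$ for all $s\in\mathcal F$.
   Context: Inverse semigroup: each $s$ has a unique $s^*$ with $ss^*s=s$, $s^*ss^*=s^*$. A representation is a unital homomorphism $\alpha\colon S\to\mathcal I(X)$ into partial bijections of $X$; $D_{s^*s}$ is the domain of $\alpha_s$. For $u,v\in X$, $u\approx v$ iff there is $s\in S$ with $u\in D_{s^*s}$ and $\alpha_s(u)=v$ (an equivalence relation). $A$ is $S$-domain F\o lner if there are finite non-empty $F_n\subseteq A$ with $|\alpha_s(F_n\cap D_{s^*s})\setminus F_n|/|F_n|\to0$ for every $s\in S$. *)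

(* Defs.v *)
From Stdlib Require Import Reals List.
Import ListNotations.
Open Scope R_scope.

Definition is_inverse_monoid {S : Type} (mul : S -> S -> S) (star : S -> S)
  (one : S) : Prop :=
  (forall a b c, mul a (mul b c) = mul (mul a b) c) /\
  (forall a, mul one a = a /\ mul a one = a) /\
  (forall s, mul (mul s (star s)) s = s /\ mul (mul (star s) s) (star s) = star s) /\
  (forall s t, mul (mul s t) s = s -> mul (mul t s) t = t -> t = star s).

(** Countable: enumerated by the naturals (S is non-empty since it has [one]). *)
Definition countable (S : Type) : Prop := exists f : nat -> S, forall s, exists n, f n = s.

Definition pcomp {X : Type} (f g : X -> option X) : X -> option X :=
  fun x => match g x with Some y => f y | None => None end.

Definition partial_bijection {X : Type} (f : X -> option X) : Prop :=
  forall x y z, f x = Some z -> f y = Some z -> x = y.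

(** A representation: unital homomorphism S -> I(X). alpha s x = Some y means
    x is in the domain D_{s*s} of alpha_s and alpha_s(x) = y. *)
Definition is_representation {S X : Type} (mul : S -> S -> S) (one : S)
  (alpha : S -> X -> option X) : Prop :=
  (forall s, partial_bijection (alpha s)) /\
  (forall x, alpha one x = Some x) /\
  (forall s t x, alpha (mul s t) x = pcomp (alpha s) (alpha t) x).

Definition orbit_rel {S X : Type} (alpha : S -> X -> option X) (u v : X) : Prop :=
  exists s, alpha s u = Some v.

Definition card_of {X : Type} (P : X -> Prop) (n : nat) : Prop :=
  exists l : list X, NoDup l /\ (forall y, In y l <-> P y) /\ length l = n.

Definition boundary {S X : Type} (alpha : S -> X -> option X) (s : S) (F : list X)
  : X -> Prop :=
  fun y => (exists x, In x F /\ alpha s x = Some y) /\ ~ In y F.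

Definition fin_nonempty_subset {X : Type} (A : X -> Prop) (F : list X) : Prop :=
  NoDup F /\ F <> [] /\ (forall x, In x F -> A x).

Definition domain_folner {S X : Type} (alpha : S -> X -> option X) (A : X -> Prop)
  : Prop :=
  exists F : nat -> list X,
    (forall n, fin_nonempty_subset A (F n)) /\
    (forall s, exists c : nat -> nat,
        (forall n, card_of (boundary alpha s (F n)) (c n)) /\
        Un_cv (fun n => INR (c n) / INR (length (F n))) 0).

(* Main.v *)
Require Import Defs.
From Stdlib Require Import Reals List Lia Lra ClassicalEpsilon.
Import ListNotations.
Open Scope R_scope.

Definition eqX {X : Type} (x y : X) : {x = y} + {x <> y} :=
  excluded_middle_informative (x = y).

Definition img {S X : Type} (alpha : S -> X -> option X) (s : S) (F : list X) : list X :=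
  flat_map (fun x => match alpha s x with Some y => [y] | None => [] end) F.

Definition bl {S X : Type} (alpha : S -> X -> option X) (s : S) (F : list X) : list X :=
  nodup eqX (filter (fun y => if in_dec eqX y F then false else true) (img alpha s F)).

Lemma in_bl {S X : Type} (alpha : S -> X -> option X) s F y :
  In y (bl alpha s F) <-> boundary alpha s F y.
Proof.
  unfold bl, boundary, img. rewrite nodup_In, filter_In, in_flat_map.
  split.
  - intros [[x [Hx Hy]] Hn]. destruct (in_dec eqX y F); [discriminate|].
    split; [|assumption]. exists x; split; auto.
    destruct (alpha s x); simpl in Hy; [destruct Hy as [->|[]]; auto | contradiction].
  - intros [[x [Hx Hy]] Hn]. split.
    + exists x; split; auto. rewrite Hy; simpl; auto.
    + destruct (in_dec eqX y F); [contradiction|reflexivity].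
Qed.

Lemma bl_card {S X : Type} (alpha : S -> X -> option X) s F :
  card_of (boundary alpha s F) (length (bl alpha s F)).
Proof.
  exists (bl alpha s F). split; [apply NoDup_nodup|]. split; [|reflexivity].
  intro y; apply in_bl.
Qed.

Lemma card_unique {X : Type} (P : X -> Prop) n m :
  card_of P n -> card_of P m -> n = m.
Proof.
  intros [l [Hl [Hi Hn]]] [l' [Hl' [Hi' Hm]]]. subst.
  apply Nat.le_antisymm; apply NoDup_incl_length; auto; intros y Hy.
  - apply Hi', Hi, Hy.
  - apply Hi, Hi', Hy.
Qed.

Section Rel.
End Rel.

Lemma rel_refl {S X : Type} (mul : S -> S -> S) one (alpha : S -> X -> option X) :
  is_representation mul one alpha -> forall x, orbit_rel alpha x x.
Proof. intros [_ [H1 _]] x. exists one. apply H1. Qed.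

Lemma rel_trans {S X : Type} (mul : S -> S -> S) one (alpha : S -> X -> option X) :
  is_representation mul one alpha -> forall x y z,
  orbit_rel alpha x y -> orbit_rel alpha y z -> orbit_rel alpha x z.
Proof.
  intros [_ [_ Hm]] x y z [s Hs] [t Ht]. exists (mul t s).
  rewrite Hm. unfold pcomp. rewrite Hs. exact Ht.
Qed.

Lemma rel_sym {S X : Type} (mul : S -> S -> S) star one (alpha : S -> X -> option X) :
  is_inverse_monoid mul star one ->
  is_representation mul one alpha -> forall x y,
  orbit_rel alpha x y -> orbit_rel alpha y x.
Proof.
  intros [_ [_ [Hinv _]]] [Hpb [_ Hm]] x y [s Hs]. exists (star s).
  destruct (Hinv s) as [E _].
  assert (H : alpha (mul (mul s (star s)) s) x = Some y) by (rewrite E; exact Hs).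
  rewrite Hm in H. unfold pcomp in H. rewrite Hs in H. rewrite Hm in H.
  unfold pcomp in H. destruct (alpha (star s) y) as [w|] eqn:Ew; [|discriminate].
  f_equal. apply (Hpb s w x y); auto.
Qed.

Definition relb {S X : Type} (alpha : S -> X -> option X) (x y : X) : bool :=
  if excluded_middle_informative (orbit_rel alpha x y) then true else false.

Lemma relb_true {S X : Type} (alpha : S -> X -> option X) x y :
  relb alpha x y = true <-> orbit_rel alpha x y.
Proof. unfold relb; destruct excluded_middle_informative; split; auto; discriminate. Qed.

Lemma relb_false {S X : Type} (alpha : S -> X -> option X) x y :
  negb (relb alpha x y) = true <-> ~ orbit_rel alpha x y.
Proof. unfold relb; destruct excluded_middle_informative; simpl; split; auto; try discriminate; tauto. Qed.

Lemma split_card {S X : Type} (mul : S -> S -> S) star one (alpha : S -> X -> option X) :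
  is_inverse_monoid mul star one ->
  is_representation mul one alpha -> forall x s F,
  length (bl alpha s F) =
  (length (bl alpha s (filter (relb alpha x) F)) +
   length (bl alpha s (filter (fun y => negb (relb alpha x y)) F)))%nat.
Proof.
  intros HS HR x s F.
  set (C := filter (relb alpha x) F).
  set (R := filter (fun y => negb (relb alpha x y)) F).
  assert (HC : forall y, In y C <-> In y F /\ orbit_rel alpha x y).
  { intro y; unfold C; rewrite filter_In, relb_true; tauto. }
  assert (HRr : forall y, In y R <-> In y F /\ ~ orbit_rel alpha x y).
  { intro y; unfold R; rewrite filter_In, relb_false; tauto. }
  assert (Hstep : forall u y, alpha s u = Some y -> orbit_rel alpha u y) by
    (intros u y H; exists s; exact H).
  assert (BC : forall y, In y (bl alpha s C) -> orbit_rel alpha x y).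
  { intros y Hy. apply in_bl in Hy. destruct Hy as [[u [Hu Huy]] _].
    apply HC in Hu. eapply rel_trans; eauto. apply Hu. }
  rewrite <- length_app.
  apply (card_unique (boundary alpha s F)); [apply bl_card|].
  exists (bl alpha s C ++ bl alpha s R). split; [|split; [|reflexivity]].
  - apply NoDup_app; try apply NoDup_nodup.
    intros y H1 H2. apply BC in H1. apply in_bl in H2.
    destruct H2 as [[u [Hu Huy]] _]. apply HRr in Hu. apply (proj2 Hu).
    eapply rel_trans; eauto. eapply rel_sym; eauto.
  - intro y; rewrite in_app_iff, !in_bl. split.
    + intros [H|H].
      * pose proof (BC y (proj2 (in_bl _ _ _ _) H)) as Hxy.
        destruct H as [[u [Hu Huy]] Hn]. split.
        { exists u; split; auto. apply HC in Hu; apply Hu. }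
        intro Hf. apply Hn, HC; auto.
      * destruct H as [[u [Hu Huy]] Hn]. apply HRr in Hu. split.
        { exists u; split; auto; apply Hu. }
        intro Hf. destruct (excluded_middle_informative (orbit_rel alpha x y)) as [Hxy|Hxy].
        { apply (proj2 Hu). eapply rel_trans; eauto. eapply rel_sym; eauto. }
        { apply Hn, HRr; auto. }
    + intros [[u [Hu Huy]] Hn].
      destruct (excluded_middle_informative (orbit_rel alpha x u)) as [Hxu|Hxu].
      * left. split. { exists u; split; auto; apply HC; auto. }
        intro Hy; apply Hn, HC, Hy.
      * right. split. { exists u; split; auto; apply HRr; auto. }
        intro Hy; apply Hn, HRr, Hy.
Qed.

Fixpoint Tsum {S X : Type} (alpha : S -> X -> option X) (L : list S) (F : list X) : nat :=
  match L with
  | [] => 0%nat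
  | s :: L' => (length (bl alpha s F) + Tsum alpha L' F)%nat
  end.

Lemma Tsum_split {S X : Type} (mul : S -> S -> S) star one (alpha : S -> X -> option X) :
  is_inverse_monoid mul star one ->
  is_representation mul one alpha -> forall x L F,
  Tsum alpha L F =
  (Tsum alpha L (filter (relb alpha x) F) +
   Tsum alpha L (filter (fun y => negb (relb alpha x y)) F))%nat.
Proof.
  intros HS HR x L F. induction L as [|s L IH]; simpl; [reflexivity|].
  rewrite IH, (split_card mul star one alpha HS HR x s F). lia.
Qed.

Lemma Tsum_ge {S X : Type} (alpha : S -> X -> option X) L F s :
  In s L -> (length (bl alpha s F) <= Tsum alpha L F)%nat.
Proof.
  induction L as [|t L IH]; simpl; [tauto|]. intros [->|H]; [lia|].
  specialize (IH H); lia.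
Qed.

Lemma pigeon {S X : Type} (mul : S -> S -> S) star one (alpha : S -> X -> option X)
  (A : X -> Prop) eps L :
  is_inverse_monoid mul star one ->
  is_representation mul one alpha -> forall n F,
  (length F <= n)%nat -> fin_nonempty_subset A F ->
  INR (Tsum alpha L F) < eps * INR (length F) ->
  exists F0, fin_nonempty_subset A F0 /\
    (forall u v, In u F0 -> In v F0 -> orbit_rel alpha u v) /\
    INR (Tsum alpha L F0) < eps * INR (length F0).
Proof.
  intros HS HR n. induction n as [|n IH]; intros F Hlen [HND [Hne HA]] HT.
  { destruct F; [congruence|simpl in Hlen; lia]. }
  destruct F as [|x F']; [congruence|].
  set (F := x :: F') in *.
  set (C := filter (relb alpha x) F).
  set (R := filter (fun y => negb (relb alpha x y)) F).
  pose proof (Tsum_split mul star one alpha HS HR x L F) as Hsp.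
  pose proof (filter_length (relb alpha x) F) as Hl.
  fold C R in Hsp, Hl.
  destruct (Rlt_dec (INR (Tsum alpha L C)) (eps * INR (length C))) as [Hc|Hc].
  - exists C. split; [|split; auto].
    + split; [apply NoDup_filter; auto|]. split.
      * assert (In x C). { unfold C; apply filter_In; split; [left; auto|].
          apply relb_true; eapply rel_refl; eauto. }
        destruct C; [contradiction|congruence].
      * intros y Hy; apply HA. unfold C in Hy; apply filter_In in Hy; apply Hy.
    + intros u v Hu Hv. unfold C in Hu, Hv. apply filter_In in Hu, Hv.
      destruct Hu as [_ Hu]; destruct Hv as [_ Hv].
      apply relb_true in Hu, Hv. eapply rel_trans; [eassumption| |exact Hv].
      eapply rel_sym; eauto.
  - apply (IH R).
    + assert (~ In x R). { unfold R; rewrite filter_In, relb_false. intros [_ H]; apply H.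
        eapply rel_refl; eauto. }
      assert (Hc1 : (1 <= length C)%nat).
      { assert (In x C). { unfold C; apply filter_In; split; [left; auto|].
          apply relb_true; eapply rel_refl; eauto. }
        destruct C; [contradiction|simpl; lia]. }
      lia.
    + split; [apply NoDup_filter; auto|]. split.
      * intro HR0. apply Hc. rewrite HR0 in Hl. simpl in Hl.
        rewrite Nat.add_0_r in Hl. rewrite Hl.
        apply (Rle_lt_trans _ (INR (Tsum alpha L F))); [|exact HT].
        apply le_INR. lia.
      * intros y Hy; apply HA. unfold R in Hy; apply filter_In in Hy; apply Hy.
    + rewrite <- Hl, Hsp in HT. rewrite !plus_INR in HT.
      apply Rnot_lt_le in Hc. lra.
Qed.

Lemma folner_sum {S X : Type} (alpha : S -> X -> option X) (A : X -> Prop)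
  (F : nat -> list X) :
  (forall n, fin_nonempty_subset A (F n)) ->
  (forall s, exists c : nat -> nat,
        (forall n, card_of (boundary alpha s (F n)) (c n)) /\
        Un_cv (fun n => INR (c n) / INR (length (F n))) 0) ->
  forall L eps, 0 < eps -> exists N, forall n, (n >= N)%nat ->
    INR (Tsum alpha L (F n)) < eps * INR (length (F n)).
Proof.
  intros HF Hc L. induction L as [|s L IH]; intros eps Heps.
  - exists 0%nat; intros n _. simpl.
    assert (0 < INR (length (F n))).
    { apply lt_0_INR. destruct (HF n) as [_ [Hne _]]. destruct (F n); [congruence|simpl; lia]. }
    nra.
  - destruct (Hc s) as [c [Hcc Hcv]].
    destruct (Hcv (eps/2)) as [N1 HN1]; [lra|].
    destruct (IH (eps/2)) as [N2 HN2]; [lra|].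
    exists (max N1 N2). intros n Hn. simpl.
    assert (Hpos : 0 < INR (length (F n))).
    { apply lt_0_INR. destruct (HF n) as [_ [Hne _]]. destruct (F n); [congruence|simpl; lia]. }
    specialize (HN1 n ltac:(lia)). specialize (HN2 n ltac:(lia)).
    rewrite (card_unique _ _ _ (bl_card alpha s (F n)) (Hcc n)).
    unfold Rdist in HN1. rewrite Rminus_0_r in HN1.
    apply Rabs_def2 in HN1. destruct HN1 as [HN1 _].
    apply (Rmult_lt_compat_r (INR (length (F n)))) in HN1; [|exact Hpos].
    unfold Rdiv in HN1. rewrite Rmult_assoc, Rinv_l in HN1 by lra.
    rewrite plus_INR. lra.
Qed.

Theorem mainTheorem17 (S : Type) (mul : S -> S -> S) (star : S -> S) (one : S)
  (HS : is_inverse_monoid mul star one) (Hcount : countable S)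
  (X : Type) (alpha : S -> X -> option X) (Halpha : is_representation mul one alpha)
  (A : X -> Prop) (HA : domain_folner alpha A)
  (eps : R) (heps : 0 < eps) (calF : list S) :
  exists F0 : list X,
    fin_nonempty_subset A F0 /\
    (forall u v, In u F0 -> In v F0 -> orbit_rel alpha u v) /\
    (forall s, In s calF ->
       exists k : nat, card_of (boundary alpha s F0) k /\ INR k < eps * INR (length F0)).
Proof.
  destruct HA as [F [HF Hc]].
  destruct (folner_sum alpha A F HF Hc calF eps heps) as [N HN].
  destruct (pigeon mul star one alpha A eps calF HS Halpha (length (F N)) (F N)
    (le_n _) (HF N) (HN N (le_n _))) as [F0 [H1 [H2 H3]]].
  exists F0. split; [exact H1|]. split; [exact H2|].
  intros s Hs. exists (length (bl alpha s F0)). split; [apply bl_card|].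
  apply (Rle_lt_trans _ (INR (Tsum alpha calF F0))); [|exact H3].
  apply le_INR, Tsum_ge, Hs.
Qed.
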